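(* Let $\Psi$ be a well-formed declarative context and suppose $\Psi\vdash e\Rightarrow A$. Then: (i) if $\Psi,x:A\vdash e'\Leftarrow C$ then $\Psi\vdash[e/x]e'\Leftarrow C$; (ii) if $\Psi,x:A\vdash e'\Rightarrow C$ then $\Psi\vdash[e/x]e'\Rightarrow C$; (iii) if $\Psi,x:A\vdash e'\bullet B\Rightarrow\!\!\Rightarrow C$ then $\Psi\vdash[e/x]e'\bullet B\Rightarrow\!\!\Rightarrow C$.
   Context: Types $A,B,C ::= 1\mid\alpha\mid\forall\alpha.A\mid A\to B$; monotypes $\sigma,\tau ::= 1\mid\alpha\mid\sigma\to\tau$; declarative contexts $\Psi ::= \cdot\mid\Psi,\alpha\mid\Psi,x:A$. Well-formedness $\Psi\vdash A$: all type variables of $A$ are bound or declared in $\Psi$. Declarative subtyping $\Psi\vdash A\le B$: least relation with $\alpha\in\Psi\Rightarrow\Psi\vdash\alpha\le\alpha$; $\Psi\vdash1\le1$; ($\Psi\vdash B_1\le A_1$, $\Psi\vdash A_2\le B_2$) $\Rightarrow\Psi\vdash A_1\to A_2\le B_1\to B_2$; ($\Psi\vdash\tau$ monotype, $\Psi\vdash[\tau/\alpha]A\le B$) $\Rightarrow\Psi\vdash\forall\alpha.A\le B$; $\Psi,\beta\vdash A\le B\Rightarrow\Psi\vdash A\le\forall\beta.B$. Terms $e ::= x\mid()\mid\lambda x.e\mid e_1\,e_2\mid(e:A)$; $[e/x]e'$ is capture-avoiding substitution of terms. Declarative bidirectional judgments (checking $\Leftarrow$, synthesis $\Rightarrow$,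 application $e\bullet A\Rightarrow\!\!\Rightarrow C$) are defined mutually by: $(x:A)\in\Psi\Rightarrow\Psi\vdash x\Rightarrow A$; ($\Psi\vdash e\Rightarrow A$, $\Psi\vdash A\le B$) $\Rightarrow\Psi\vdash e\Leftarrow B$; ($\Psi\vdash A$, $\Psi\vdash e\Leftarrow A$) $\Rightarrow\Psi\vdash(e:A)\Rightarrow A$; $\Psi\vdash()\Leftarrow1$; $\Psi\vdash()\Rightarrow1$; $\Psi,\alpha\vdash e\Leftarrow A\Rightarrow\Psi\vdash e\Leftarrow\forall\alpha.A$; ($\Psi\vdash\tau$ monotype, $\Psi\vdash e\bullet[\tau/\alpha]A\Rightarrow\!\!\Rightarrow C$) $\Rightarrow\Psi\vdash e\bullet\forall\alpha.A\Rightarrow\!\!\Rightarrow C$; $\Psi,x:A\vdash e\Leftarrow B\Rightarrow\Psi\vdash\lambda x.e\Leftarrow A\to B$; ($\Psi\vdash\sigma\to\tau$ monotypes, $\Psi,x:\sigma\vdash e\Leftarrow\tau$) $\Rightarrow\Psi\vdash\lambda x.e\Rightarrow\sigma\to\tau$; ($\Psi\vdash e_1\Rightarrow A$, $\Psi\vdash e_2\bullet A\Rightarrow\!\!\Rightarrow C$) $\Rightarrow\Psi\vdash e_1\,e_2\Rightarrow C$; $\Psi\vdash e\Leftarrow A\Rightarrow\Psi\vdash e\bullet A\to C\Rightarrow\!\!\Rightarrow C$. *)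

(* Defs.v *)
(* Declarative bidirectional system (Dunfield–Krishnaswami style),
   represented with de Bruijn indices:
   - type variables are de Bruijn indices counting the type-variable entries
     (alpha) of the context, most recent = 0; forall binds index 0 of its body;
   - term variables are de Bruijn indices counting the term-variable entries
     (x : A) of the context, most recent = 0; lambda binds index 0 of its body.
   The two index spaces are separate. *)
From Stdlib Require Import Arith List.
Import ListNotations.

Inductive typ : Type :=
| TUnit : typ
| TVar : nat -> typ
| TAll : typ -> typ
| TArr : typ -> typ -> typ.

Fixpoint mono (A : typ) : Prop :=
  match A with
  | TUnit => True
  | TVar _ => True
  | TAll _ => False
  | TArr A B => mono A /\ mono B
  end.

Fixpoint tshift (c : nat) (A : typ) : typ :=
  match A with
  | TUnit => TUnit
  | TVar n => if n <? c then TVar n else TVar (S n)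
  | TAll B => TAll (tshift (S c) B)
  | TArr A1 A2 => TArr (tshift c A1) (tshift c A2)
  end.

Fixpoint tsubst (k : nat) (s : typ) (A : typ) : typ :=
  match A with
  | TUnit => TUnit
  | TVar n => if n <? k then TVar n else if n =? k then s else TVar (pred n)
  | TAll B => TAll (tsubst (S k) (tshift 0 s) B)
  | TArr A1 A2 => TArr (tsubst k s A1) (tsubst k s A2)
  end.

(* [tau/alpha]A where A is the body of forall alpha. A *)
Definition topen (tau A : typ) : typ := tsubst 0 tau A.

Inductive tm : Type :=
| Var : nat -> tm
| Unit : tm
| Lam : tm -> tm
| App : tm -> tm -> tm
| Anno : tm -> typ -> tm.

Fixpoint shift (c : nat) (e : tm) : tm :=
  match e with
  | Var n => if n <? c then Var n else Var (S n)
  | Unit => Unit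
  | Lam b => Lam (shift (S c) b)
  | App e1 e2 => App (shift c e1) (shift c e2)
  | Anno e1 A => Anno (shift c e1) A
  end.

Fixpoint subst (k : nat) (s : tm) (e : tm) : tm :=
  match e with
  | Var n => if n <? k then Var n else if n =? k then s else Var (pred n)
  | Unit => Unit
  | Lam b => Lam (subst (S k) (shift 0 s) b)
  | App e1 e2 => App (subst k s e1) (subst k s e2)
  | Anno e1 A => Anno (subst k s e1) A
  end.

Fixpoint tm_tshift (e : tm) : tm :=
  match e with
  | Var n => Var n
  | Unit => Unit
  | Lam b => Lam (tm_tshift b)
  | App e1 e2 => App (tm_tshift e1) (tm_tshift e2)
  | Anno e1 A => Anno (tm_tshift e1) (tshift 0 A)
  end.

(* declarative contexts; the head of the list is the most recent entry *)
Inductive entry : Type :=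
| CTv : entry
| CVar : typ -> entry.   (* x : A, A relative to the preceding context *)

Definition ctx := list entry.

Fixpoint ntv (G : ctx) : nat :=
  match G with
  | [] => 0
  | CTv :: G => S (ntv G)
  | CVar _ :: G => ntv G
  end.

(* type of term variable k, expressed relative to the whole context *)
Fixpoint lookup (G : ctx) (k : nat) : option typ :=
  match G with
  | [] => None
  | CTv :: G => option_map (tshift 0) (lookup G k)
  | CVar A :: G => match k with 0 => Some A | S k' => lookup G k' end
  end.

Fixpoint wf_typ_n (n : nat) (A : typ) : Prop :=
  match A with
  | TUnit => True
  | TVar m => m < n
  | TAll B => wf_typ_n (S n) B
  | TArr A1 A2 => wf_typ_n n A1 /\ wf_typ_n n A2
  end.

Definition wf_typ (G : ctx) (A : typ) : Prop := wf_typ_n (ntv G) A.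

Fixpoint wf_ctx (G : ctx) : Prop :=
  match G with
  | [] => True
  | CTv :: G => wf_ctx G
  | CVar A :: G => wf_ctx G /\ wf_typ G A
  end.

Inductive sub : ctx -> typ -> typ -> Prop :=
| SubVar : forall G n, n < ntv G -> sub G (TVar n) (TVar n)
| SubUnit : forall G, sub G TUnit TUnit
| SubArr : forall G A1 A2 B1 B2,
    sub G B1 A1 -> sub G A2 B2 -> sub G (TArr A1 A2) (TArr B1 B2)
| SubAllL : forall G A B tau,
    mono tau -> wf_typ G tau -> sub G (topen tau A) B -> sub G (TAll A) B
| SubAllR : forall G A B,
    sub (CTv :: G) (tshift 0 A) B -> sub G A (TAll B).

(* check G e A : Psi |- e <= A;  synth G e A : Psi |- e => A;
   app G e A C : Psi |- e . A =>> C *)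
Inductive check : ctx -> tm -> typ -> Prop :=
| ChkSub : forall G e A B, synth G e A -> sub G A B -> check G e B
| ChkUnit : forall G, check G Unit TUnit
| ChkAllI : forall G e A, check (CTv :: G) (tm_tshift e) A -> check G e (TAll A)
| ChkLam : forall G e A B, check (CVar A :: G) e B -> check G (Lam e) (TArr A B)
with synth : ctx -> tm -> typ -> Prop :=
| SynVar : forall G k A, lookup G k = Some A -> synth G (Var k) A
| SynAnno : forall G e A, wf_typ G A -> check G e A -> synth G (Anno e A) A
| SynUnit : forall G, synth G Unit TUnit
| SynLam : forall G e s t,
    mono (TArr s t) -> wf_typ G (TArr s t) -> check (CVar s :: G) e t ->
    synth G (Lam e) (TArr s t)
| SynApp : forall G e1 e2 A C, synth G e1 A -> app G e2 A C -> synth G (App e1 e2) C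
with app : ctx -> tm -> typ -> typ -> Prop :=
| AppAll : forall G e A C tau,
    mono tau -> wf_typ G tau -> app G e (topen tau A) C -> app G e (TAll A) C
| AppArr : forall G e A C, check G e A -> app G e (TArr A C) C.

(* Main.v *)
Require Import Defs.
From Stdlib Require Import Arith Lia.

Lemma tshift_tshift : forall A d c, d <= c ->
  tshift (S c) (tshift d A) = tshift d (tshift c A).
Proof.
  induction A; intros d c H; simpl; auto.
  - destruct (Nat.ltb_spec n d); destruct (Nat.ltb_spec n c); simpl.
    + destruct (Nat.ltb_spec n (S c)); destruct (Nat.ltb_spec n d); try lia; auto.
    + destruct (Nat.ltb_spec n (S c)); destruct (Nat.ltb_spec n d); try lia; auto.
    + destruct (Nat.ltb_spec (S n) (S c)); destruct (Nat.ltb_spec n d); try lia; auto.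
    + destruct (Nat.ltb_spec (S n) (S c)); destruct (Nat.ltb_spec (S n) d); try lia; auto.
  - f_equal. apply IHA. lia.
  - f_equal; auto.
Qed.

Lemma tshift_tsubst : forall A k c s, k <= c ->
  tshift c (tsubst k s A) = tsubst k (tshift c s) (tshift (S c) A).
Proof.
  induction A; intros k c s H; simpl; auto.
  - destruct (Nat.ltb_spec n (S c)); simpl.
    + destruct (Nat.ltb_spec n k); simpl.
      * destruct (Nat.ltb_spec n c); [reflexivity | lia].
      * destruct (Nat.eqb_spec n k); simpl; auto.
        destruct (Nat.ltb_spec (pred n) c); [reflexivity | lia].
    + destruct (Nat.ltb_spec (S n) k); [lia|].
      destruct (Nat.eqb_spec (S n) k); [lia|].
      destruct (Nat.ltb_spec n k); [lia|].
      destruct (Nat.eqb_spec n k); [lia|]. simpl.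
      destruct (Nat.ltb_spec (pred n) c); try lia. destruct k as [|k]; [f_equal; lia|]. destruct (Nat.eqb_spec n k); [lia|]. f_equal; lia.
  - f_equal. rewrite IHA by lia. f_equal. apply tshift_tshift. lia.
  - f_equal; auto.
Qed.

Lemma mono_tshift : forall A c, mono A -> mono (tshift c A).
Proof. induction A; intros c H; simpl in *; auto.
  destruct (n <? c); simpl; auto. destruct H; split; auto. Qed.

Lemma wf_tshift : forall A n c, wf_typ_n n A -> wf_typ_n (S n) (tshift c A).
Proof. induction A; intros m c H; simpl in *; auto.
  destruct (Nat.ltb_spec n c); simpl; lia. destruct H; split; auto. Qed.

Fixpoint tmts (c : nat) (e : tm) : tm :=
  match e with
  | Var n => Var n
  | Unit => Unit
  | Lam b => Lam (tmts c b)
  | App e1 e2 => App (tmts c e1) (tmts c e2)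
  | Anno e1 A => Anno (tmts c e1) (tshift c A)
  end.

Lemma tmts0 : forall e, tm_tshift e = tmts 0 e.
Proof. induction e; simpl; f_equal; auto. Qed.

Lemma tmts_tmts : forall e c, tmts (S c) (tmts 0 e) = tmts 0 (tmts c e).
Proof. induction e; intros c; simpl; f_equal; auto. apply tshift_tshift; lia. Qed.

Lemma tmts_shift : forall s c d, tmts d (shift c s) = shift c (tmts d s).
Proof. induction s; intros c d; simpl; auto.
  destruct (n <? c); auto. f_equal; auto. f_equal; auto. f_equal; auto. Qed.

Lemma tmts_subst : forall e k s, tmts 0 (subst k s e) = subst k (tmts 0 s) (tmts 0 e).
Proof. induction e; intros k s; simpl; auto.
  - destruct (n <? k); auto. destruct (n =? k); auto.
  - f_equal. rewrite IHe. f_equal. apply tmts_shift.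
  - f_equal; auto.
  - f_equal; auto.
Qed.

Scheme check_ind' := Induction for check Sort Prop
with synth_ind' := Induction for synth Sort Prop
with app_ind' := Induction for app Sort Prop.
Combined Scheme cjoint from check_ind', synth_ind', app_ind'.

Lemma sub_ntv : forall G A B, sub G A B -> forall G', ntv G' = ntv G -> sub G' A B.
Proof.
  induction 1; intros G' Hn.
  - constructor. lia.
  - constructor.
  - constructor; auto.
  - eapply SubAllL; eauto. unfold wf_typ in *. rewrite Hn; auto.
  - constructor. apply IHsub. simpl. lia.
Qed.

Lemma sub_tshift : forall G A B, sub G A B -> forall G' c, ntv G' = S (ntv G) ->
  sub G' (tshift c A) (tshift c B).
Proof.
  induction 1; intros G' c Hn; simpl.
  - destruct (Nat.ltb_spec n c); constructor; lia.
  - constructor.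
  - constructor; auto.
  - eapply SubAllL with (tau := tshift c tau).
    + apply mono_tshift; auto.
    + unfold wf_typ in *. rewrite Hn. apply wf_tshift; auto.
    + unfold topen. rewrite <- tshift_tsubst by lia. apply IHsub; auto.
  - constructor. rewrite <- tshift_tshift by lia.
    apply IHsub. simpl. lia.
Qed.

Lemma weak_tv :
  (forall G e A, check G e A -> forall G' c, ntv G' = S (ntv G) ->
     (forall k, lookup G' k = option_map (tshift c) (lookup G k)) ->
     check G' (tmts c e) (tshift c A)) /\
  (forall G e A, synth G e A -> forall G' cc, ntv G' = S (ntv G) ->
     (forall k, lookup G' k = option_map (tshift cc) (lookup G k)) ->
     synth G' (tmts cc e) (tshift cc A)) /\
  (forall G e A C, app G e A C -> forall G' cc, ntv G' = S (ntv G) ->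
     (forall k, lookup G' k = option_map (tshift cc) (lookup G k)) ->
     app G' (tmts cc e) (tshift cc A) (tshift cc C)).
Proof.
  apply cjoint; intros; simpl.
  - econstructor; eauto. eapply sub_tshift; eauto.
  - constructor.
  - constructor. rewrite tmts0. rewrite <- tmts_tmts. rewrite tmts0 in H.
    apply H; simpl; auto. intros k. rewrite H1.
    destruct (lookup G k); simpl; auto. f_equal.
    symmetry. apply tshift_tshift. lia.
  - constructor. apply H; simpl; auto. intros [|k]; simpl; auto.
  - constructor. rewrite H0, e. reflexivity.
  - constructor. unfold wf_typ in *. rewrite H0. apply wf_tshift; auto.
    apply H; auto.
  - constructor.
  - change (tshift cc (TArr s t)) with (TArr (tshift cc s) (tshift cc t)).
    constructor.
    + apply (mono_tshift (TArr s t)); auto.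
    + unfold wf_typ in *. rewrite H0. apply (wf_tshift (TArr s t)); auto.
    + apply H; simpl; auto. intros [|k]; simpl; auto.
  - econstructor; eauto.
  - eapply AppAll with (tau := tshift cc tau).
    + apply mono_tshift; auto.
    + unfold wf_typ in *. rewrite H0. apply wf_tshift; auto.
    + unfold topen. rewrite <- tshift_tsubst by lia. apply H; auto.
  - constructor. apply H; auto.
Qed.

Lemma weak_v :
  (forall G e A, check G e A -> forall G' cc, ntv G' = ntv G ->
     (forall k, k < cc -> lookup G' k = lookup G k) ->
     (forall k, k >= cc -> lookup G' (S k) = lookup G k) ->
     check G' (shift cc e) A) /\
  (forall G e A, synth G e A -> forall G' cc, ntv G' = ntv G ->
     (forall k, k < cc -> lookup G' k = lookup G k) ->
     (forall k, k >= cc -> lookup G' (S k) = lookup G k) ->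
     synth G' (shift cc e) A) /\
  (forall G e A C, app G e A C -> forall G' cc, ntv G' = ntv G ->
     (forall k, k < cc -> lookup G' k = lookup G k) ->
     (forall k, k >= cc -> lookup G' (S k) = lookup G k) ->
     app G' (shift cc e) A C).
Proof.
  apply cjoint; intros; simpl.
  - econstructor; eauto. eapply sub_ntv; eauto.
  - constructor.
  - constructor. rewrite tmts0, tmts_shift, <- tmts0. apply H; simpl; auto.
    + intros k Hk. rewrite H1; auto.
    + intros k Hk. rewrite H2; auto.
  - constructor. apply H; simpl; auto.
    + intros [|k] Hk; simpl; auto. apply H1. lia.
    + intros [|k] Hk; simpl; [lia|]. apply H2. lia.
  - destruct (Nat.ltb_spec k cc); constructor.
    + rewrite H0; auto.
    + rewrite H1; auto.
  - constructor. unfold wf_typ in *. rewrite H0; auto. apply H; auto.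
  - constructor.
  - constructor; auto. unfold wf_typ in *. rewrite H0; auto.
    apply H; simpl; auto.
    + intros [|k] Hk; simpl; auto. apply H1. lia.
    + intros [|k] Hk; simpl; [lia|]. apply H2. lia.
  - econstructor; eauto.
  - econstructor; eauto. unfold wf_typ in *. rewrite H0; auto.
  - constructor. apply H; auto.
Qed.

Lemma subst_gen :
  (forall G e A, check G e A -> forall G' k s B, ntv G' = ntv G ->
     lookup G k = Some B -> synth G' s B ->
     (forall j, j < k -> lookup G' j = lookup G j) ->
     (forall j, j >= k -> lookup G' j = lookup G (S j)) ->
     check G' (subst k s e) A) /\
  (forall G e A, synth G e A -> forall G' k s B, ntv G' = ntv G ->
     lookup G k = Some B -> synth G' s B ->
     (forall j, j < k -> lookup G' j = lookup G j) ->
     (forall j, j >= k -> lookup G' j = lookup G (S j)) ->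
     synth G' (subst k s e) A) /\
  (forall G e A C, app G e A C -> forall G' k s B, ntv G' = ntv G ->
     lookup G k = Some B -> synth G' s B ->
     (forall j, j < k -> lookup G' j = lookup G j) ->
     (forall j, j >= k -> lookup G' j = lookup G (S j)) ->
     app G' (subst k s e) A C).
Proof.
  apply cjoint; intros; simpl.
  - econstructor; eauto. eapply sub_ntv; eauto.
  - constructor.
  - constructor. rewrite tmts0, tmts_subst. rewrite tmts0 in H.
    eapply H with (B := tshift 0 B); simpl; eauto.
    + rewrite H1; reflexivity.
    + apply (proj1 (proj2 weak_tv)) with (G := G'); simpl; auto.
    + intros j Hj. rewrite H3; auto.
    + intros j Hj. rewrite H4; auto.
  - constructor. eapply H with (k := S k) (s := shift 0 s); simpl; eauto.
    + apply (proj1 (proj2 weak_v)) with (G := G'); simpl; auto.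
      all: intros; simpl; auto; try lia.
    + intros [|j] Hj; simpl; auto. apply H3. lia.
    + intros [|j] Hj; simpl; [lia|]. apply H4. lia.
  - destruct (Nat.ltb_spec k k0).
    + constructor. rewrite H2 by lia; auto.
    + destruct (Nat.eqb_spec k k0).
      * subst. congruence.
      * constructor. destruct k; [lia|]. simpl. rewrite H3 by lia. auto.
  - constructor. unfold wf_typ in *. rewrite H0; auto. eapply H; eauto.
  - constructor.
  - constructor; auto. unfold wf_typ in *. rewrite H0; auto.
    eapply H with (k := S k) (s := shift 0 s0); simpl; eauto.
    + apply (proj1 (proj2 weak_v)) with (G := G'); simpl; auto.
      all: intros; simpl; auto; try lia.
    + intros [|j] Hj; simpl; auto. apply H3. lia.
    + intros [|j] Hj; simpl; [lia|]. apply H4. lia.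
  - econstructor; eauto.
  - econstructor; eauto. unfold wf_typ in *. rewrite H0; auto.
  - constructor. eapply H; eauto.
Qed.

Theorem mainTheorem3 : forall (Psi : ctx) (e : tm) (A : typ),
  wf_ctx Psi ->
  synth Psi e A ->
  (forall e' C, check (cons (CVar A) Psi) e' C -> check Psi (subst 0 e e') C) /\
  (forall e' C, synth (cons (CVar A) Psi) e' C -> synth Psi (subst 0 e e') C) /\
  (forall e' B C, app (cons (CVar A) Psi) e' B C -> app Psi (subst 0 e e') B C).
Proof.
  intros Psi e A _ H. destruct subst_gen as [H1 [H2 H3]].
  repeat split; intros.
  - eapply H1 with (B := A); eauto; simpl; auto. intros; lia.
  - eapply H2 with (B := A); eauto; simpl; auto. intros; lia.
  - eapply H3 with (B := A); eauto; simpl; auto. intros; lia.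
Qed.
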